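(* Let $r>0$ and $k\geq 1$ be an integer. Let $\mathcal N=(G,\beta,r)$ be a multi-path network of length $k$: $G=(V,A)$ is a weakly connected directed multigraph without loops with node set $V=\{v_0,v_1,\dots,v_k\}$, in which every arc joins two consecutive nodes $v_{i-1},v_i$ for some $i\in\{1,\dots,k\}$, and $\beta\in\mathbb{R}^A_{>0}$. For $i=1,\dots,k$ let $A_i$ be the set of arcs joining $v_{i-1}$ and $v_i$, and set $u_i:=\sum_{a\in A_i}\mu_a$, where $\mu_a=\beta_a^{-1/r}$. Let $s=v_0$ and $t=v_k$. Then the effective conductance between $s$ and $t$ in $\mathcal N$ is $$U^{\mathcal N}_{s,t}=\Big(\sum_{i=1}^k u_i^{-r}\Big)^{-1/r}.$$
   Context: A potential-based flow network $\mathcal N=(G,\beta,r)$ consists of a weakly connected directed multigraph $G=(V,A)$ without loops, resistances $\beta\in\mathbb{R}^A_{>0}$ and a degree $r>0$; the conductance of arc $a$ is $\mu_a=\beta_a^{-1/r}$. For a balanced vector $b\in\mathbb{R}^V$ (i.e. $\sum_v b_v=0$), a potential-based $b$-transshipment is a pair $(\pi,f)\in\mathbb{R}^V\times\mathbb{R}^A$ with $\pi_u-\pi_v=\beta_a\,\mathrm{sign}(f_a)|f_a|^r$ for every arc $a=(u,v)$ and $\sum_{a\in\delta^+(v)}f_a-\sum_{a\in\delta^-(v)}f_a=b_v$ for all $v\in V$ (here $\delta^+(v)$, $\delta^-(v)$ are the arcs leaving, resp. entering, $v$). Such a pair exists for every balanced $b$ and is unique up to adding a constant to $\pi$; let $\pi^{\mathcal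 N}(b)$ denote the potential vector normalized to have smallest entry $0$. For distinct $s,t\in V$ let $\chi_{s,t}=\chi_s-\chi_t$ (difference of unit vectors). The effective resistance is $R^{\mathcal N}_{s,t}=\pi^{\mathcal N}_s(\chi_{s,t})-\pi^{\mathcal N}_t(\chi_{s,t})$ and the effective conductance is $U^{\mathcal N}_{s,t}=(R^{\mathcal N}_{s,t})^{-1/r}$. *)

(* Defs.v *)
From HB Require Import structures.
From Stdlib Require Import ClassicalEpsilon.
From mathcomp Require Import all_boot all_order all_algebra.
From mathcomp Require Import all_classical all_reals all_analysis.
Set Implicit Arguments. Unset Strict Implicit. Unset Printing Implicit Defensive.
Import Order.TTheory GRing.Theory Num.Theory.
Local Open Scope ring_scope.

Section PBFlow.
Variables (R : realType) (V A : finType) (tail head : A -> V).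

Definition loopless : Prop := forall a, tail a != head a.

Definition adj : rel V := fun x y =>
  [exists a, ((tail a == x) && (head a == y)) || ((tail a == y) && (head a == x))].

Definition weakly_connected : Prop := forall x y : V, connect adj x y.

Definition sgnpow (r x : R) : R := Num.sg x * (`|x| `^ r).

Definition balanced (b : V -> R) : Prop := \sum_(v : V) b v = 0.

Definition pb_transshipment (beta : A -> R) (r : R) (b : V -> R)
  (pi : V -> R) (f : A -> R) : Prop :=
  (forall a, pi (tail a) - pi (head a) = beta a * sgnpow r (f a)) /\
  (forall v, \sum_(a | tail a == v) f a - \sum_(a | head a == v) f a = b v).

(* pi^N(b): the potential of a potential-based b-transshipment, normalized to
   have smallest entry 0 (chosen by Hilbert's epsilon; well-defined by the
   existence/uniqueness fact recalled in the paper). *)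
Definition pot_N (beta : A -> R) (r : R) (b : V -> R) : V -> R :=
  epsilon (inhabits (fun _ : V => 0 : R))
    (fun pi => (exists f, pb_transshipment beta r b pi f) /\
               (forall v, 0 <= pi v) /\ (exists v, pi v = 0)).

Definition chi (s t : V) : V -> R := fun v => (v == s)%:R - (v == t)%:R.

Definition eff_res (beta : A -> R) (r : R) (s t : V) : R :=
  pot_N beta r (chi s t) s - pot_N beta r (chi s t) t.

Definition eff_cond (beta : A -> R) (r : R) (s t : V) : R :=
  eff_res beta r s t `^ (- r^-1).

Definition conductance (beta : A -> R) (r : R) (a : A) : R := beta a `^ (- r^-1).

End PBFlow.

(* Multi-path networks of length k: node set V = {v_0,...,v_k} = 'I_k.+1,
   v_i represented by the ordinal i. *)
Definition joins (k : nat) (A : finType) (tail head : A -> 'I_k.+1)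
  (a : A) (i : nat) : bool :=
  ((tail a == i.-1 :> nat) && (head a == i :> nat)) ||
  ((tail a == i :> nat) && (head a == i.-1 :> nat)).

Definition multipath (k : nat) (A : finType) (tail head : A -> 'I_k.+1) : Prop :=
  forall a, exists2 i : nat, (1 <= i <= k)%N & joins tail head a i.

Definition u_layer (R : realType) (k : nat) (A : finType)
  (tail head : A -> 'I_k.+1) (beta : A -> R) (r : R) (i : nat) : R :=
  \sum_(a | joins tail head a i) conductance beta r a.

(* Main.v *)
Require Import Defs.
From HB Require Import structures.
From Stdlib Require Import ClassicalEpsilon.
From mathcomp Require Import all_boot all_order all_algebra.
From mathcomp Require Import all_classical all_reals all_analysis.
From mathcomp Require Import zify.
Import Order.TTheory GRing.Theory Num.Theory.
Local Open Scope ring_scope.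

Section Helpers.
Set Implicit Arguments.
Unset Strict Implicit.

Lemma nat_joins t h j i : (0 < j)%N ->
  ((t == j.-1) && (h == j)) || ((t == j) && (h == j.-1)) ->
  (((t == i.-1) && (h == i)) || ((t == i) && (h == i.-1))) = (j == i).
Proof. move=> j0 H; apply/idP/idP; lia. Qed.

Lemma nat_cut t h j i : (0 < j)%N ->
  ((t == j.-1) && (h == j)) || ((t == j) && (h == j.-1)) -> j != i ->
  (t < i)%N = (h < i)%N.
Proof. move=> j0 H ne; apply/idP/idP; lia. Qed.

Lemma powRVl (R : realType) (b p : R) : 0 < b -> b^-1 `^ p = (b `^ p)^-1.
Proof.
move=> b0; have hp : b `^ p != 0 by rewrite gt_eqF // powR_gt0.
apply: (mulfI hp); rewrite -powRM ?mulfV ?gt_eqF ?powR_gt0 ?powR1 ?invr_ge0 ?ltW //.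
Qed.

Lemma sgnpow0 (R : realType) (p : R) : sgnpow p 0 = 0.
Proof. by rewrite /sgnpow sgr0 mul0r. Qed.

Lemma sgnpowN (R : realType) (p x : R) : sgnpow p (- x) = - sgnpow p x.
Proof. by rewrite /sgnpow sgrN normrN mulNr. Qed.

Lemma sgnpowK (R : realType) (r x : R) : 0 < r -> sgnpow r^-1 (sgnpow r x) = x.
Proof.
move=> r0; have [->|x0] := eqVneq x 0; first by rewrite !sgnpow0.
have y0 : 0 < `|x| `^ r by rewrite powR_gt0 // normr_gt0.
rewrite /sgnpow sgrM sgr_id (gtr0_sg y0) mulr1 normrM normr_sg x0 /= mul1r.
rewrite (gtr0_norm y0) -powRrM mulfV ?gt_eqF // powRr1 ?normr_ge0 //.
by rewrite mulr_sg_norm.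
Qed.

Lemma sgnpowK' (R : realType) (r x : R) : 0 < r -> sgnpow r (sgnpow r^-1 x) = x.
Proof. move=> r0; have ri : 0 < r^-1 by rewrite invr_gt0.
have := @sgnpowK R r^-1 x ri; by rewrite invrK. Qed.

Lemma sgnpow_div (R : realType) (r d b : R) : 0 < b ->
  sgnpow r^-1 (d / b) = Num.sg d * `|d| `^ r^-1 * b `^ (- r^-1).
Proof.
move=> b0; have bi : 0 < b^-1 by rewrite invr_gt0.
rewrite /sgnpow sgrM (gtr0_sg bi) mulr1.
rewrite normrM (gtr0_norm bi) powRM ?normr_ge0 ?invr_ge0 ?ltW //.
by rewrite powRVl // powRN mulrA.
Qed.

Lemma solve_d (R : realType) (r d u : R) : 0 < r -> 0 <= u ->
  Num.sg d * `|d| `^ r^-1 * u = 1 -> d = u `^ (- r).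
Proof.
move=> r0 u0 h.
have d0 : 0 < d.
  rewrite ltNge; apply/negP => dle.
  have : Num.sg d * `|d| `^ r^-1 * u <= 0.
    rewrite -mulrA; apply: mulr_le0_ge0; first by rewrite sgr_le0.
    by apply: mulr_ge0 => //; apply: powR_ge0.
  by rewrite h leNgt ltr01.
rewrite gtr0_sg // mul1r gtr0_norm // in h.
have u0' : 0 < u.
  rewrite lt_neqAle u0 andbT; apply/eqP => u_0; move: h.
  by rewrite -u_0 mulr0 => /eqP; rewrite eq_sym oner_eq0.
have -> : d = (d `^ r^-1) `^ r by rewrite -powRrM mulVf ?gt_eqF // powRr1 // ltW.
have -> : d `^ r^-1 = u^-1.
  have un : u != 0 by rewrite gt_eqF.
  by apply: (mulIf un); rewrite h mulVf.
by rewrite powRVl // powRN.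
Qed.

Lemma sum_ind (R : realType) n (x : 'I_n) (i : nat) :
  \sum_(v : 'I_n | (v < i)%N) ((v == x)%:R : R) = ((x < i)%N)%:R.
Proof.
rewrite big_mkcond (bigD1 x) //= eqxx big1 ?addr0; first by case: (x < i)%N.
by move=> v /negbTE ->; case: (v < i)%N.
Qed.

Definition node (R : realType) k (A : finType) (tail head : A -> 'I_k.+1)
  (f : A -> R) (v : 'I_k.+1) : R :=
  \sum_(a | tail a == v) f a - \sum_(a | head a == v) f a.

Definition orient (R : realType) k (A : finType) (tail head : A -> 'I_k.+1)
  (a : A) : R := if (tail a < head a)%N then 1 else -1.
Arguments orient {R k A} tail head a.

Lemma cut_eq (R : realType) k (A : finType) (tail head : A -> 'I_k.+1)
  (f : A -> R) (i : nat) :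
  \sum_(v : 'I_k.+1 | (v < i)%N) node tail head f v =
  \sum_a (((tail a < i)%N)%:R - ((head a < i)%N)%:R) * f a.
Proof.
rewrite /node sumrB.
have E : forall g : A -> 'I_k.+1,
    \sum_(v : 'I_k.+1 | (v < i)%N) \sum_(a | g a == v) f a =
    \sum_a ((g a < i)%N)%:R * f a.
  move=> g.
  have E1 : forall v : 'I_k.+1, \sum_(a | g a == v) f a = \sum_a (v == g a)%:R * f a.
    move=> v; rewrite big_mkcond; apply: eq_bigr => a _; rewrite eq_sym.
    by case: (v == g a); rewrite /= ?mulr1n ?mulr0n ?mul1r ?mul0r.
  rewrite (eq_bigr (fun v => \sum_a (v == g a)%:R * f a)); last by move=> v _; exact: E1.
  rewrite exchange_big; apply: eq_bigr => a _.
  by rewrite -mulr_suml sum_ind.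
by rewrite !E -sumrB; apply: eq_bigr => a _; rewrite mulrBl.
Qed.

Lemma coef (R : realType) k (A : finType) (tail head : A -> 'I_k.+1) a i :
  multipath tail head -> (1 <= i)%N ->
  ((((tail a < i)%N)%:R - ((head a < i)%N)%:R) : R) =
  if joins tail head a i then orient tail head a else 0.
Proof.
move=> mp i1; have [j /andP[j1 jk] J] := mp a.
have JE : joins tail head a i = (j == i) by exact: nat_joins.
rewrite JE; have [ji|ne] := eqVneq j i.
  subst j; rewrite /orient; move: J; rewrite /joins.
  case/orP=> /andP[/eqP -> /eqP ->].
    have -> : (i.-1 < i)%N by lia.
    by rewrite ltnn subr0.
  have -> : (i < i.-1)%N = false by lia.
  have -> : (i.-1 < i)%N by lia.
  by rewrite ltnn sub0r.
by rewrite (nat_cut j1 J ne) subrr.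
Qed.

Lemma cut_layer (R : realType) k (A : finType) (tail head : A -> 'I_k.+1)
  (f : A -> R) (i : nat) : multipath tail head -> (1 <= i)%N ->
  \sum_(v : 'I_k.+1 | (v < i)%N) node tail head f v =
  \sum_(a | joins tail head a i) orient tail head a * f a.
Proof.
move=> mp i1; rewrite cut_eq [RHS]big_mkcond; apply: eq_bigr => a _ /=.
by rewrite coef //; case: ifP; rewrite ?mul0r.
Qed.

Lemma cut_split (R : realType) n (F : 'I_n -> R) (v : 'I_n) :
  \sum_(w : 'I_n | (w < v.+1)%N) F w = \sum_(w : 'I_n | (w < v)%N) F w + F v.
Proof.
rewrite (bigD1 v) /= ?ltnSn // addrC; congr (_ + _); apply: eq_bigl => w.
by rewrite ltnS ltn_neqAle andbC.
Qed.

Lemma layer_ne k (A : finType) (tail head : A -> 'I_k.+1) i :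
  multipath tail head -> weakly_connected tail head -> (1 <= i <= k)%N ->
  exists a, joins tail head a i.
Proof.
move=> mp wc /andP[i1 ik].
case: (pickP (fun a => joins tail head a i)) => [a Ja|none]; first by exists a.
exfalso.
have step : forall x y, adj tail head x y -> (x < i)%N = (y < i)%N.
  move=> x y /existsP[a /orP[/andP[/eqP<- /eqP<-]|/andP[/eqP<- /eqP<-]]];
  have [j /andP[j1 _] J] := mp a;
  (have ne : j != i by apply/eqP => ji; move: (none a); rewrite /= -ji J).
    exact: nat_cut j1 J ne.
  by symmetry; exact: nat_cut j1 J ne.
have := wc ord0 ord_max; case/connectP => p Hp El.
have H : forall (x : 'I_k.+1) q, path (adj tail head) x q ->
    (x < i)%N = (last x q < i)%N.
  move=> x0 q; elim: q x0 => [|y q IH] x0 //= /andP[H1 H2].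
  by rewrite (step _ _ H1) IH.
move: (H _ _ Hp); rewrite -El /=.
by rewrite i1 ltnNge ik.
Qed.

Lemma joins_max k (A : finType) (tail head : A -> 'I_k.+1) a i :
  (0 < i)%N -> joins tail head a i -> maxn (tail a) (head a) = i.
Proof. rewrite /joins => i0 J; lia. Qed.

End Helpers.
Arguments orient {R k A} tail head a.

Theorem lemma2 (R : realType) (r : R) (k : nat) (A : finType)
  (tail head : A -> 'I_k.+1) (beta : A -> R) :
  0 < r -> (1 <= k)%N ->
  loopless tail head -> weakly_connected tail head ->
  multipath tail head -> (forall a, 0 < beta a) ->
  eff_cond tail head beta r ord0 ord_max =
  (\sum_(1 <= i < k.+1) u_layer tail head beta r i `^ (- r)) `^ (- r^-1).
Proof.
move=> r0 k1 _ wc mp beta0.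
pose u := u_layer tail head beta r.
pose D := fun i : nat => u i `^ (- r).
have u_ge0 : forall i, 0 <= u i.
  by move=> i; apply: sumr_ge0 => a _; apply: powR_ge0.
have u_gt0 : forall i, (1 <= i <= k)%N -> 0 < u i.
  move=> i ik; have [a Ja] := layer_ne mp wc ik.
  rewrite /u /u_layer (bigD1 a) //=.
  apply: (lt_le_trans (_ : 0 < conductance beta r a)); first by apply: powR_gt0.
  by rewrite lerDl; apply: sumr_ge0 => b _; apply: powR_ge0.
have oo : forall a, orient tail head a * orient tail head a = 1 :> R.
  by move=> a; rewrite /orient; case: ifP; rewrite ?mulr1 ?mulrNN ?mulr1.
have uniq : forall pi f,
    pb_transshipment tail head beta r (chi R ord0 ord_max) pi f ->
    pi ord0 - pi ord_max = \sum_(1 <= i < k.+1) D i.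
  move=> pi f [Hpot Hcons].
  pose p := fun j : nat => pi (inord j).
  have arc : forall i a, (1 <= i <= k)%N -> joins tail head a i ->
      orient tail head a * f a = sgnpow r^-1 ((p i.-1 - p i) / beta a).
    move=> i a /andP[i1 ik] J.
    have Hf : f a = sgnpow r^-1 ((pi (tail a) - pi (head a)) / beta a).
      by rewrite Hpot mulrC mulKf ?gt_eqF // sgnpowK.
    rewrite Hf /orient; move: J; rewrite /joins.
    case/orP=> /andP[/eqP T /eqP H].
      have Et : tail a = inord i.-1.
        by apply: val_inj; rewrite /= T inordK //; lia.
      have Eh : head a = inord i.
        by apply: val_inj; rewrite /= H inordK //; lia.
      rewrite T H (_ : (i.-1 < i)%N = true) ?mul1r; last by lia.
      by rewrite Et Eh.
    have Et : tail a = inord i by apply: val_inj; rewrite /= T inordK //; lia.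
    have Eh : head a = inord i.-1.
      by apply: val_inj; rewrite /= H inordK //; lia.
    rewrite T H (_ : (i < i.-1)%N = false) /=; last by lia.
    by rewrite Et Eh mulN1r -sgnpowN -mulNr opprB.
  have layer : forall i, (1 <= i <= k)%N -> p i.-1 - p i = D i.
    move=> i ik; have /andP[i1 ik'] := ik.
    have := cut_layer f mp i1.
    rewrite (eq_bigr (fun v => chi R ord0 ord_max v)); last by move=> v _; exact: Hcons.
    rewrite /chi sumrB !sum_ind /= i1 ltnNge ik' /= mulr1n mulr0n subr0.
    rewrite (eq_bigr (fun a => sgnpow r^-1 ((p i.-1 - p i) / beta a))); last first.
      by move=> a Ja; exact: arc.
    under eq_bigr => a _ do rewrite (sgnpow_div _ _ (beta0 a)).
    rewrite -mulr_sumr => /esym h.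
    exact: solve_d r0 (u_ge0 i) h.
  have -> : pi ord0 = p 0 by rewrite /p; congr pi; apply: val_inj; rewrite /= inordK.
  have -> : pi ord_max = p k by rewrite /p; congr pi; apply: val_inj; rewrite /= inordK.
  have -> : \sum_(1 <= i < k.+1) D i = \sum_(1 <= i < k.+1) (p i.-1 - p i).
    by apply: eq_big_nat => i ik; rewrite layer.
  rewrite big_add1 /=; under eq_bigr do rewrite -opprB.
  by rewrite sumrN telescope_sumr // opprB.
pose P := fun j : nat => \sum_(j <= i < k) D i.+1.
pose f0 := fun a => orient tail head a *
  sgnpow r^-1 (D (maxn (tail a) (head a)) / beta a).
have PD : forall j, (1 <= j <= k)%N -> P j.-1 - P j = D j.
  move=> j /andP[j1 jk]; rewrite /P (big_ltn (_ : j.-1 < k)%N); last by lia.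
  by rewrite prednK // addrK.
have cut0 : forall i, (i <= k.+1)%N ->
    \sum_(v : 'I_k.+1 | (v < i)%N) node tail head f0 v =
    ((0 < i)%N)%:R - ((k < i)%N)%:R.
  move=> i ik.
  case: (posnP i) => [->|i0].
    rewrite cut_eq big1 ?subrr // => a _.
    by rewrite !ltn0 subrr mul0r.
  case: (ltnP k i) => ki.
    have -> : i = k.+1 by lia.
    rewrite cut_eq big1 => [|a _]; last by rewrite !ltn_ord subrr mul0r.
    by rewrite subrr.
  rewrite cut_layer // ?i0 ?(ltnNge k i) ?ki /= ?mulr1n ?mulr0n ?subr0.
  rewrite (eq_bigr (fun a => sgnpow r^-1 (D i / beta a))) => [|a Ja]; last first.
    by rewrite /f0 mulrA oo mul1r (joins_max i0 Ja).
  under eq_bigr => a _ do rewrite (sgnpow_div _ _ (beta0 a)).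
  rewrite -mulr_sumr.
  have ui : 0 < u i by apply: u_gt0; rewrite i0 ki.
  have Di : 0 < D i by apply: powR_gt0.
  rewrite gtr0_sg // mul1r gtr0_norm //.
  have -> : D i `^ r^-1 = (u i)^-1.
    by rewrite /D -powRrM mulNr mulfV ?gt_eqF // powR_inv1 // ltW.
  by rewrite mulVf // gt_eqF.
have ex : exists pi : 'I_k.+1 -> R,
    (exists f, pb_transshipment tail head beta r (chi R ord0 ord_max) pi f) /\
    (forall v, 0 <= pi v) /\ (exists v, pi v = 0).
  exists (fun v : 'I_k.+1 => P v); split; last split.
  - exists f0; split.
      move=> a /=.
      have [j /andP[j1 jk] J] := mp a.
      rewrite /f0 (joins_max j1 J).
      move: J; rewrite /joins /orient.
      case/orP=> /andP[/eqP T /eqP H].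
        rewrite T H (_ : (j.-1 < j)%N = true); last by lia.
        rewrite mul1r sgnpowK' // mulrC divfK ?gt_eqF //.
        by apply: PD; rewrite j1 jk.
      rewrite T H (_ : (j < j.-1)%N = false) /=; last by lia.
      rewrite mulN1r sgnpowN sgnpowK' // mulrN mulrC divfK ?gt_eqF //.
      by rewrite -PD ?j1 ?jk // opprB.
    move=> v.
    have hv1 : (v.+1 <= k.+1)%N := ltn_ord v.
    have hv0 : (v <= k.+1)%N by have := ltn_ord v; lia.
    have E1 := cut_split (node tail head f0) v.
    have E2 := cut_split (chi R ord0 ord_max) v.
    rewrite (cut0 _ hv1) (cut0 _ hv0) in E1.
    rewrite /chi sumrB !sum_ind sumrB !sum_ind /= in E2.
    move: E1; rewrite E2 => /addrI H.
    change (node tail head f0 v = chi R ord0 ord_max v).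
    by rewrite /chi -H.
  - by move=> v /=; apply: sumr_ge0 => i _; apply: powR_ge0.
  - by exists ord_max; rewrite /= /P big_geq.
have [[f Hf] _] := epsilon_spec (inhabits (fun _ : 'I_k.+1 => 0 : R)) _ ex.
by rewrite /eff_cond /eff_res /pot_N (uniq _ _ Hf).
Qed.
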